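(* Let $S=\{s_1,\dots,s_{k_1}\}$ and $T=\{t_1,\dots,t_{k_2}\}$ be nonempty sets of positive integers and $d=\gcd\{s+t: s\in S,t\in T\}$. For every positive integer $k$ there is an integer $r$ such that for each $j\in[k]$ there are nonnegative integers $a_{i,j}$ ($1\le i\le k_1$) and $b_{i,j}$ ($1\le i\le k_2$) with $$r+jd=\sum_{i=1}^{k_1}a_{i,j}s_i-\sum_{i=1}^{k_2}b_{i,j}t_i,$$ and such that $f(j):=\sum_{i=1}^{k_1}a_{i,j}+\sum_{i=1}^{k_2}b_{i,j}$ is the same for all $j\in[k]$. *)

(* Defs.v *)
From mathcomp Require Import all_boot all_order all_algebra.
Set Implicit Arguments. Unset Strict Implicit. Unset Printing Implicit Defensive.
Import Order.TTheory GRing.Theory Num.Theory.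

Definition gcd_sums (k1 k2 : nat) (s : 'I_k1 -> nat) (t : 'I_k2 -> nat) : nat :=
  \big[gcdn/0]_(i < k1) \big[gcdn/0]_(l < k2) (s i + t l).

(* Main.v *)
Require Import Defs.
From mathcomp Require Import all_boot all_order all_algebra ring.
Import Order.TTheory GRing.Theory Num.Theory.
Local Open Scope ring_scope.

Lemma bez n (F : 'I_n -> nat) : exists c : 'I_n -> int,
  (\big[gcdn/0%N]_(i<n) F i)%:Z = \sum_(i<n) c i * (F i)%:Z.
Proof.
elim: n F => [|n IH] F.
  by exists (fun _ => 0); rewrite !big_ord0.
have [c Hc] := IH (fun i => F (lift ord0 i)).
have [u [v Huv]] := Bezoutz (F ord0)%:Z (\big[gcdn/0%N]_(i<n) F (lift ord0 i))%:Z.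
exists (fun i => if unlift ord0 i is Some i' then v * c i' else u).
rewrite big_ord_recl big_ord_recl unlift_none.
have -> : (gcdn (F ord0) (\big[gcdn/0%N]_(i<n) F (lift ord0 i)))%:Z
   = gcdz (F ord0)%:Z (\big[gcdn/0%N]_(i<n) F (lift ord0 i))%:Z by [].
rewrite -Huv Hc; congr (_ + _).
rewrite mulr_sumr; apply: eq_bigr => i _; by rewrite liftK mulrA.
Qed.

Lemma nonneg1 (j k : nat) (x : int) : (j <= k)%N -> 0 <= k%:Z * `|x| + j%:Z * x.
Proof.
move=> hjk.
have h1 : - (j%:Z * `|x|) <= j%:Z * x.
  by rewrite -mulrN; apply: ler_wpM2l => //; rewrite lerNl -normrN ler_norm.
have h2 : j%:Z * `|x| <= k%:Z * `|x| by apply: ler_wpM2r => //; rewrite lez_nat.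
rewrite -(subrr (j%:Z * `|x|)); apply: lerD => //.
Qed.

Lemma nonneg2 (j k : nat) (x : int) : (j <= k)%N -> 0 <= k%:Z * `|x| - j%:Z * x.
Proof. by move=> h; rewrite -mulrN -normrN; apply: nonneg1. Qed.

Lemma absK (y : int) : 0 <= y -> (`|y|%N)%:Z = y.
Proof. by move=> h; rewrite gez0_abs. Qed.

Lemma Posz_sum (I : finType) (F : I -> nat) : (\sum_i F i)%:Z = \sum_i (F i)%:Z.
Proof. exact: (big_morph Posz PoszD erefl). Qed.

Theorem theorem4p2 (k1 k2 : nat) (s : 'I_k1 -> nat) (t : 'I_k2 -> nat) :
  (0 < k1)%N -> (0 < k2)%N ->
  injective s -> injective t ->
  (forall i, (0 < s i)%N) -> (forall i, (0 < t i)%N) ->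
  forall k : nat, (0 < k)%N ->
  exists r : int, exists (a : 'I_k1 -> nat -> nat) (b : 'I_k2 -> nat -> nat),
    (forall j : nat, (1 <= j <= k)%N ->
       r + (j * gcd_sums s t)%:Z
       = (\sum_(i < k1) (a i j * s i)%:Z) - (\sum_(i < k2) (b i j * t i)%:Z))
    /\ (forall j j' : nat, (1 <= j <= k)%N -> (1 <= j' <= k)%N ->
       (\sum_(i < k1) a i j + \sum_(i < k2) b i j
        = \sum_(i < k1) a i j' + \sum_(i < k2) b i j')%N).
Proof.
move=> _ _ _ _ _ _ k _.
have [cO HO] := bez _ (fun i : 'I_k1 => \big[gcdn/0%N]_(l<k2) (s i + t l)%N).
have HI0 : forall i : 'I_k1, exists cc : 'I_k2 -> int,
    (\big[gcdn/0%N]_(l<k2) (s i + t l)%N)%:Z = \sum_(l<k2) cc l * (s i + t l)%N%:Z.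
  by move=> i; exact: (bez _ (fun l => s i + t l)).
have [cI HI] := fin_all_exists HI0.
pose c i l := cO i * cI i l.
pose C i := \sum_(l < k2) c i l.
pose D l := \sum_(i < k1) c i l.
have Hd2 : (gcd_sums s t)%:Z = \sum_i C i * (s i)%:Z + \sum_l D l * (t l)%:Z.
  rewrite /gcd_sums HO.
  have -> : \sum_i D i * (t i)%:Z = \sum_i \sum_l c l i * (t i)%:Z.
    by apply: eq_bigr => l _; rewrite mulr_suml.
  rewrite (exchange_big _ _ _ _ _ (fun l i => c i l * (t l)%:Z)) /= -big_split /=.
  apply: eq_bigr => i _; rewrite HI mulr_sumr mulr_suml -big_split /=.
  by apply: eq_bigr => l _; rewrite PoszD /c; ring.
have HCD : \sum_i C i = \sum_l D l by rewrite /C /D exchange_big.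
pose a (i : 'I_k1) (j : nat) : nat := absz (k%:Z * `|C i| + j%:Z * C i)%R.
pose b (l : 'I_k2) (j : nat) : nat := absz (k%:Z * (Num.norm (D l)) - j%:Z * D l)%R.
exists (\sum_i k%:Z * `|C i| * (s i)%:Z - \sum_l k%:Z * (Num.norm (D l)) * (t l)%:Z), a, b.
split.
  move=> j /andP [_ hj].
  have E1 : \sum_i ((a i j * s i)%N)%:Z
      = \sum_i k%:Z * `|C i| * (s i)%:Z + j%:Z * \sum_i C i * (s i)%:Z.
    rewrite mulr_sumr -big_split; apply: eq_bigr => i _ /=.
    rewrite PoszM absK; last exact: nonneg1.
    ring.
  have E2 : \sum_l ((b l j * t l)%N)%:Z
      = \sum_l k%:Z * (Num.norm (D l)) * (t l)%:Z - j%:Z * \sum_l D l * (t l)%:Z.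
    rewrite mulr_sumr -sumrB; apply: eq_bigr => i _ /=.
    rewrite PoszM absK; last exact: nonneg2.
    ring.
  rewrite E1 E2 PoszM Hd2; ring.
have key j : (1 <= j <= k)%N -> ((\sum_i a i j + \sum_l b l j)%N)%:Z
   = \sum_i k%:Z * `|C i| + \sum_l k%:Z * (Num.norm (D l)).
  move=> /andP [_ hj].
  rewrite PoszD !Posz_sum.
  have -> : \sum_i (a i j)%:Z = \sum_i k%:Z * `|C i| + j%:Z * \sum_i C i.
    rewrite mulr_sumr -big_split; apply: eq_bigr => i _ /=.
    by rewrite absK //; exact: nonneg1.
  have -> : \sum_l (b l j)%:Z = \sum_l k%:Z * (Num.norm (D l)) - j%:Z * \sum_l D l.
    rewrite mulr_sumr -sumrB; apply: eq_bigr => i _ /=.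
    by rewrite absK //; exact: nonneg2.
  rewrite HCD; ring.
move=> j j' hj hj'; apply/eqP; rewrite -eqz_nat key // key //.
Qed.
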